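(* Let $G=(V,E,\ell,\Phi)$ be a trackable weak model (not necessarily strongly connected). Let $T\ge 1$ and let $\pi_1,\pi_2,\pi_3:\{0,1,\dots,T\}\to V$ be walks (i.e. $(\pi_j(i),\pi_j(i+1))\in E$ for $0\le i<T$, $j=1,2,3$) such that: (1) $\ell(\pi_1(i))=\ell(\pi_2(i))=\ell(\pi_3(i))$ for all $0\le i\le T$; (2) $\pi_1(0)=\pi_1(T)=a$; (3) $\pi_2(0)=\pi_2(T)=b$ with $b\neq a$; (4) $\pi_3(0)=a$ and $\pi_3(T)=b$. Then every node $\pi_1(i)$, $0\le i\le T$, is transient. (In particular, since a trackable model with $n_G(t)$ not bounded by a constant possesses such a triple, in such a model the cycle $\pi_1$ consists only of transient nodes.)
   Context: A (single-colored) weak model $G=(V,E,\ell,\Phi)$ consists of a finite set of nodes $V$, directed edges $E\subseteq V\times V$, a finite color set $\Phi$ and a coloring $\ell:V\to\Phi$. A walk of length $t$ is a node sequence $(x_1,\dots,x_t)$ with $(x_i,x_{i+1})\in E$. For $Y_{[t]}\in\Phi^t$, $\mathcal H_G(Y_{[t]})$ is the set of walks $(x_1,\dots,x_t)$ with $\ell(x_i)=Y_i$ for all $i$, and $n_G(t)=\max_{Y_{[t]}}|\mathcal H_G(Y_{[t]})|$. $G$ is trackable if $n_G(t)=O(t^k)$ for some $k\ge0$. A node $j$ is accessible from node $i$ if there is a directed path (possibly of length zero) from $i$ to $j$. A node $i$ is recurrent if $i$ is accessible from every node $j$ that is accessible from $i$; otherwise $i$ is transient. It is known (from prior work) that for a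 trackable model either $n_G(t)=O(1)$ or there exist walks $\pi_1,\pi_2,\pi_3$ as in the statement. *)

(* Defs.v *)
From mathcomp Require Import all_boot.
Set Implicit Arguments. Unset Strict Implicit. Unset Printing Implicit Defensive.

Definition is_walk (V : finType) (E : rel V) (s : seq V) : bool :=
  if s is x :: s' then path E x s' else true.

Definition Hset (V Phi : finType) (E : rel V) (l : V -> Phi) (t : nat)
  (Y : t.-tuple Phi) : {set t.-tuple V} :=
  [set w : t.-tuple V | is_walk E w && (map l w == Y)].

Definition nG (V Phi : finType) (E : rel V) (l : V -> Phi) (t : nat) : nat :=
  \max_(Y : t.-tuple Phi) #|Hset E l Y|.

Definition trackable (V Phi : finType) (E : rel V) (l : V -> Phi) : Prop :=
  exists k C N : nat, forall t, N <= t -> nG E l t <= C * t ^ k.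

Definition recurrent (V : finType) (E : rel V) (i : V) : Prop :=
  forall j, connect E i j -> connect E j i.

Definition transient (V : finType) (E : rel V) (i : V) : Prop :=
  ~ recurrent E i.

(* Main.v *)
Require Import Defs.
From mathcomp Require Import all_boot zify.
Lemma expn_mono m n e : m <= n -> m ^ e <= n ^ e.
Proof. move=> h; elim: e => [|e IH]; rewrite ?expn0 // !expnS; exact: leq_mul. Qed.

Lemma growth C K M N : 0 < M -> exists k, N <= k*M+1 /\ C*(k*M+1)^K < 2^k.
Proof.
move=> M0.
set D := K.+1 * M.
have D0 : 0 < D by rewrite muln_gt0.
set r := C * D ^ K + N.
exists (r * K.+1).
have kM : r * K.+1 * M = r * D by rewrite /D mulnA.
rewrite kM; split; first by nia.
apply: (@leq_trans ((r.+1) ^ K.+1)); last first.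
  rewrite expnM; apply: expn_mono; exact: ltn_expl.
apply: (@leq_ltn_trans (C * D ^ K * r.+1 ^ K)).
  rewrite -mulnA -expnMn leq_mul2l; apply/orP; right; apply: expn_mono; nia.
rewrite expnSr [_ * r.+1]mulnC ltn_mul2r expn_gt0 /=.
rewrite /r; lia.
Qed.
Set Implicit Arguments. Unset Strict Implicit.

Lemma mkseq_cons (T : Type) (f : nat -> T) n :
  mkseq f n.+1 = f 0 :: mkseq (fun i => f i.+1) n.
Proof.
apply: (@eq_from_nth _ (f 0)); first by rewrite size_mkseq /= size_mkseq.
rewrite size_mkseq => i hi; rewrite nth_mkseq //.
by case: i hi => [|i] hi //=; rewrite nth_mkseq.
Qed.

Lemma walk_mkseq (V : finType) (E : rel V) (f : nat -> V) n :
  (forall i, i < n -> E (f i) (f i.+1)) -> is_walk E (mkseq f n.+1).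
Proof.
move=> h; rewrite mkseq_cons /=.
apply/(pathP (f 0)) => i; rewrite size_mkseq => hi.
rewrite nth_mkseq //.
case: i hi => [|i] hi /=; first exact: h.
rewrite nth_mkseq; [exact: h | exact: ltnW].
Qed.

Definition gw (V : Type) (f0 f1 : nat -> V) M (s : seq bool) n :=
  if nth false s (n %/ M) then f1 (n %% M) else f0 (n %% M).

Lemma divmod_eq M q r : r < M -> (q * M + r) %/ M = q /\ (q * M + r) %% M = r.
Proof.
move=> h; have M0 : 0 < M by lia.
by rewrite divnMDl // modnMDl divn_small // modn_small // addn0.
Qed.

Lemma exp_lower (V Phi : finType) (E : rel V) (l : V -> Phi) (b : V) M
  (f0 f1 : nat -> V) p k :
  0 < M -> f0 0 = b -> f1 0 = b -> f0 M = b -> f1 M = b ->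
  (forall n, n < M -> E (f0 n) (f0 n.+1) /\ E (f1 n) (f1 n.+1)) ->
  (forall n, n <= M -> l (f0 n) = l (f1 n)) ->
  p < M -> f0 p <> f1 p ->
  2 ^ k <= nG E l (k * M + 1).
Proof.
move=> M0 f00 f10 f0M f1M hE hl hp hne.
pose wt (s : seq bool) : (k * M + 1).-tuple V :=
  @Tuple _ _ (mkseq (@gw V f0 f1 M s) (k * M + 1)) (introT eqP (size_mkseq _ _)).
pose Y := map_tuple l (wt [::]).
apply: (@leq_trans #|Hset E l Y|); last exact: leq_bigmax.
pose F (s : k.-tuple bool) := wt s.
have Finj : injective F.
  move=> s s' /(congr1 val) /= eqs.
  apply: val_inj; apply: (@eq_from_nth _ false); first by rewrite !size_tuple.
  rewrite size_tuple => q hq.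
  have := congr1 (fun x => nth b x (q * M + p)) eqs => /=.
  have hqp : q * M + p < k * M + 1 by nia.
  rewrite !nth_mkseq // /gw; have [-> ->] := divmod_eq q hp.
  by case: (nth false s q); case: (nth false s' q) => // /esym.
have -> : 2 ^ k = #|F @: [set: k.-tuple bool]|.
  by rewrite card_imset // cardsT card_tuple card_bool.
apply: subset_leq_card; apply/subsetP => w /imsetP [s _ ->].
rewrite inE; apply/andP; split.
  rewrite /F /wt /= addn1; apply: walk_mkseq => n hn.
  have hn' : n = (n %/ M) * M + n %% M by rewrite -divn_eq.
  have hr : n %% M < M by rewrite ltn_mod.
  set q := n %/ M in hn' *; set r := n %% M in hn' hr *.
  rewrite hn' /gw; have [-> ->] := divmod_eq q hr.
  case: (ltnP r.+1 M) => hr1.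
    rewrite -addnS; have [-> ->] := divmod_eq q hr1.
    by case: (nth false s q); have [] := hE r hr.
  have hrM : r.+1 = M by lia.
  rewrite -addnS hrM addnC -mulSn mulnK // modnMl.
  case: (nth false s q); case: (nth false s q.+1); rewrite ?f00 ?f10;
  have [h0 h1] := hE r hr; by rewrite ?hrM ?f0M ?f1M in h0 h1.
apply/eqP; rewrite /Y /F /wt /=.
rewrite /mkseq -!map_comp; apply: eq_map => n /=.
rewrite /gw /=; have hM : n %% M <= M by rewrite ltnW // ltn_mod.
by rewrite nth_nil; case: (nth false s _) => //; rewrite (hl _ hM).
Qed.

Lemma connect_walk (V : finType) (E : rel V) (f : nat -> V) T :
  (forall i, i < T -> E (f i) (f i.+1)) ->
  forall i j, i <= j -> j <= T -> connect E (f i) (f j).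
Proof.
move=> h i; elim=> [|j IH] hij hj.
  by have -> : i = 0 by lia.
case: (ltnP i j.+1) => hi; last by have -> : i = j.+1 by lia.
apply: connect_trans (IH _ _) (connect1 (h _ _)); lia.
Qed.

Theorem corollary1 (V Phi : finType) (E : rel V) (l : V -> Phi)
  (T : nat) (pi1 pi2 pi3 : nat -> V) (a b : V) :
  trackable E l ->
  1 <= T ->
  (forall i, i < T -> [/\ E (pi1 i) (pi1 i.+1), E (pi2 i) (pi2 i.+1)
                        & E (pi3 i) (pi3 i.+1)]) ->
  (forall i, i <= T -> l (pi1 i) = l (pi2 i) /\ l (pi2 i) = l (pi3 i)) ->
  pi1 0 = a -> pi1 T = a ->
  pi2 0 = b -> pi2 T = b -> b <> a ->
  pi3 0 = a -> pi3 T = b ->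
  forall i, i <= T -> transient E (pi1 i).
Proof.
move=> [K [C [N hT]]] T1 hE hl p10 p1T p20 p2T ba p30 p3T i hi hrec.
have E1 : forall j, j < T -> E (pi1 j) (pi1 j.+1) by move=> j /hE [].
have E2 : forall j, j < T -> E (pi2 j) (pi2 j.+1) by move=> j /hE [].
have E3 : forall j, j < T -> E (pi3 j) (pi3 j.+1) by move=> j /hE [].
have c1 : connect E (pi1 i) a by rewrite -p1T; apply: (connect_walk E1).
have c3 : connect E a b by rewrite -p30 -p3T; apply: (connect_walk E3).
have cba : connect E b a.
  apply: connect_trans (hrec _ (connect_trans c1 c3)) c1.
case/connectP: cba => p pp lp.
set L := size p.
pose qf n := nth b (b :: p) n.
have qL : qf L = a by rewrite lp /qf; have := nth_last b (b :: p); rewrite /= => ->.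
have qE : forall n, n < L -> E (qf n) (qf n.+1).
  by move=> n hn; move/(pathP b): pp => /(_ n hn).
pose f0 n := if n <= L then qf n else if n <= L + T then pi1 (n - L) else pi3 (n - L - T).
pose f1 n := if n <= L then qf n else if n <= L + T then pi3 (n - L) else pi2 (n - L - T).
pose M := L + T + T.
have Q0 : forall n, n <= L -> f0 n = qf n by move=> n hn; rewrite /f0 hn.
have Q1 : forall n, n <= L -> f1 n = qf n by move=> n hn; rewrite /f1 hn.
have A0 : forall n, L <= n <= L + T -> f0 n = pi1 (n - L).
  move=> n /andP [h1 h2]; rewrite /f0 h2; case: ifP => h3 //.
  have -> : n = L by lia.
  by rewrite subnn qL p10.
have A1 : forall n, L <= n <= L + T -> f1 n = pi3 (n - L).
  move=> n /andP [h1 h2]; rewrite /f1 h2; case: ifP => h3 //.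
  have -> : n = L by lia.
  by rewrite subnn qL p30.
have B0 : forall n, L + T <= n -> f0 n = pi3 (n - L - T).
  move=> n h1; rewrite /f0; case: ifP => h3; first lia.
  case: ifP => h4 //; have -> : n = L + T by lia.
  by rewrite addKn subnn p1T p30.
have B1 : forall n, L + T <= n -> f1 n = pi2 (n - L - T).
  move=> n h1; rewrite /f1; case: ifP => h3; first lia.
  case: ifP => h4 //; have -> : n = L + T by lia.
  by rewrite addKn subnn p3T p20.
have M0 : 0 < M by rewrite /M; lia.
have hf00 : f0 0 = b by rewrite Q0.
have hf10 : f1 0 = b by rewrite Q1.
have hf0M : f0 M = b by rewrite B0 /M; [rewrite -addnA addKn addnK p3T | lia].
have hf1M : f1 M = b by rewrite B1 /M; [rewrite -addnA addKn addnK p2T | lia].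
have hEf : forall n, n < M -> E (f0 n) (f0 n.+1) /\ E (f1 n) (f1 n.+1).
  move=> n hn.
  case: (ltnP n L) => h1.
    rewrite (Q0 n) ?(Q0 n.+1) ?(Q1 n) ?(Q1 n.+1); try lia.
    by split; apply: qE.
  case: (ltnP n (L + T)) => h2.
    rewrite !A0 ?A1; try lia.
    have -> : n.+1 - L = (n - L).+1 by lia.
    split; [apply: E1 | apply: E3]; lia.
  rewrite !B0 ?B1; try lia.
  have -> : n.+1 - L - T = (n - L - T).+1 by lia.
  split; [apply: E3 | apply: E2]; rewrite /M in hn; lia.
have hlf : forall n, n <= M -> l (f0 n) = l (f1 n).
  move=> n hn.
  case: (leqP n L) => h1; first by rewrite Q0 ?Q1.
  case: (leqP n (L + T)) => h2.
    rewrite A0 ?A1; try lia.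
    have [-> ->] := hl (n - L) ltac:(lia). done.
  rewrite B0 ?B1; try lia.
  have [_ ->] := hl (n - L - T) ltac:(rewrite /M in hn; lia). done.
have hp : L + T < M by rewrite /M; lia.
have hne : f0 (L + T) <> f1 (L + T).
  rewrite A0 ?A1; try lia. by rewrite addKn p1T p3T => /esym.
have [k [hk1 hk2]] := growth C K M N M0.
have h1 := exp_lower (l:=l) (E:=E) k M0 hf00 hf10 hf0M hf1M hEf hlf hp hne.
have h2 := hT _ hk1.
lia.
Qed.
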